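(* Fix $I_{ij},I_{jk},I_{ki}\in[0,\infty)$. Consider the set $$\mathcal{R}_H^{ijk}=\{(r_i,r_j,r_k)\in\mathbb{R}^3_{>0}:\ l_{ij},l_{jk},l_{ki}\text{ satisfy the strict triangle inequalities}\},$$ where $l_{ij},l_{jk},l_{ki}>0$ are given by $$\cosh l_{ij}=\cosh r_i\cosh r_j+I_{ij}\sinh r_i\sinh r_j,$$ $$\cosh l_{jk}=\cosh r_j\cosh r_k+I_{jk}\sinh r_j\sinh r_k,$$ $$\cosh l_{ki}=\cosh r_k\cosh r_i+I_{ki}\sinh r_k\sinh r_i.$$ Then $\mathcal{R}_H^{ijk}$ is a connected and simply connected open subset of $\mathbb{R}^3_{>0}$. *)

(* Defs.v *)
From Stdlib Require Import Reals.
Open Scope R_scope.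

Definition R3 : Type := (R * R * R)%type.

(* Distance on R^3 (max norm; induces the standard Euclidean topology). *)
Definition dist3 (p q : R3) : R :=
  let '(x1, y1, z1) := p in let '(x2, y2, z2) := q in
  Rmax (Rabs (x1 - x2)) (Rmax (Rabs (y1 - y2)) (Rabs (z1 - z2))).

Definition open3 (S : R3 -> Prop) : Prop :=
  forall p, S p -> exists eps, 0 < eps /\ forall q, dist3 q p < eps -> S q.

Definition connected3 (S : R3 -> Prop) : Prop :=
  forall U V : R3 -> Prop, open3 U -> open3 V ->
    (forall p, S p -> U p \/ V p) ->
    (exists p, S p /\ U p) -> (exists p, S p /\ V p) ->
    exists p, S p /\ U p /\ V p.

Definition path_cont (g : R -> R3) : Prop :=
  forall t, 0 <= t <= 1 -> forall eps, 0 < eps -> exists delta, 0 < delta /\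
    forall t', 0 <= t' <= 1 -> Rabs (t' - t) < delta -> dist3 (g t') (g t) < eps.

Definition square_cont (H : R -> R -> R3) : Prop :=
  forall s t, 0 <= s <= 1 -> 0 <= t <= 1 -> forall eps, 0 < eps ->
    exists delta, 0 < delta /\
    forall s' t', 0 <= s' <= 1 -> 0 <= t' <= 1 ->
      Rabs (s' - s) < delta -> Rabs (t' - t) < delta ->
      dist3 (H s' t') (H s t) < eps.

Definition path_in (S : R3 -> Prop) (g : R -> R3) : Prop :=
  path_cont g /\ forall t, 0 <= t <= 1 -> S (g t).

Definition path_connected3 (S : R3 -> Prop) : Prop :=
  forall p q, S p -> S q ->
    exists g, path_in S g /\ g 0 = p /\ g 1 = q.

Definition simply_connected3 (S : R3 -> Prop) : Prop :=
  path_connected3 S /\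
  forall g, path_in S g -> g 0 = g 1 ->
    exists H : R -> R -> R3,
      square_cont H /\
      (forall s t, 0 <= s <= 1 -> 0 <= t <= 1 -> S (H s t)) /\
      (forall t, 0 <= t <= 1 -> H 0 t = g t) /\
      (forall t, 0 <= t <= 1 -> H 1 t = g 0) /\
      (forall s, 0 <= s <= 1 -> H s 0 = g 0 /\ H s 1 = g 0).

(* Inverse hyperbolic cosine on [1, oo): the unique l >= 0 with cosh l = x. *)
Definition arcosh (x : R) : R := ln (x + sqrt (x * x - 1)).

Definition edge_len (I a b : R) : R :=
  arcosh (cosh a * cosh b + I * sinh a * sinh b).

Definition RH (Iij Ijk Iki : R) (p : R3) : Prop :=
  let '(ri, rj, rk) := p in
  0 < ri /\ 0 < rj /\ 0 < rk /\
  let lij := edge_len Iij ri rj in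
  let ljk := edge_len Ijk rj rk in
  let lki := edge_len Iki rk ri in
  lij < ljk + lki /\ ljk < lki + lij /\ lki < lij + ljk.

(* Main.v *)
Require Import Defs.
From Stdlib Require Import Reals Lra Nsatz Psatz Classical.
Open Scope R_scope.


Lemma sqn x : 0 <= x * x.
Proof. apply Rle_0_sqr. Qed.

Lemma expN x : exp (- x) = / exp x.
Proof. apply exp_Ropp. Qed.

Lemma cosh_sq x : cosh x * cosh x - sinh x * sinh x = 1.
Proof. unfold cosh, sinh. rewrite expN. pose proof (exp_pos x). field. lra. Qed.

Lemma cosh_pos x : 0 < cosh x.
Proof. unfold cosh. pose proof (exp_pos x); pose proof (exp_pos (-x)); lra. Qed.

Lemma cosh_ge1 x : 1 <= cosh x.
Proof. unfold cosh. rewrite expN. pose proof (exp_pos x) as H.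
  remember (exp x) as e.
  assert (e + / e - 2 = (e - 1) * (e - 1) / e) by (field; lra).
  assert (0 <= (e - 1) * (e - 1) / e). { apply Rmult_le_pos. apply sqn. left; apply Rinv_0_lt_compat; lra. }
  lra. Qed.

Lemma sinh_pos x : 0 < x -> 0 < sinh x.
Proof. intro. pose proof (sinh_lt 0 x H). rewrite sinh_0 in H0. exact H0. Qed.

Lemma sinh_nonneg x : 0 <= x -> 0 <= sinh x.
Proof. intros [H|H]. left; now apply sinh_pos. subst; rewrite sinh_0; lra. Qed.

Lemma cosh_plus x y : cosh (x + y) = cosh x * cosh y + sinh x * sinh y.
Proof. unfold cosh, sinh. rewrite exp_plus, Ropp_plus_distr, exp_plus, !expN.
  pose proof (exp_pos x); pose proof (exp_pos y). field; lra. Qed.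

Lemma cosh_minus x y : cosh (x - y) = cosh x * cosh y - sinh x * sinh y.
Proof. unfold Rminus. rewrite cosh_plus. unfold cosh, sinh. rewrite Ropp_involutive. lra. Qed.

Lemma cosh_even x : cosh (- x) = cosh x.
Proof. unfold cosh. rewrite Ropp_involutive. lra. Qed.

Lemma cosh_lt_mono u v : 0 <= u -> u < v -> cosh u < cosh v.
Proof. intros Hu Huv. unfold cosh.
  assert (E : exp v + exp (-v) - (exp u + exp (-u)) = (exp v - exp u) * (1 - exp (-u) * exp (-v))).
  { rewrite !expN. pose proof (exp_pos u); pose proof (exp_pos v). field; lra. }
  assert (exp u < exp v) by (apply exp_increasing; lra).
  assert (exp (-u) * exp (-v) < 1).
  { rewrite <- exp_plus. rewrite <- exp_0. apply exp_increasing. lra. }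
  assert (0 < (exp v - exp u) * (1 - exp (- u) * exp (- v))) by (apply Rmult_lt_0_compat; lra).
  lra. Qed.

Lemma cosh_lt_iff u v : 0 <= u -> 0 <= v -> (cosh u < cosh v <-> u < v).
Proof. intros Hu Hv. split; intro H.
  - destruct (Rlt_or_le u v) as [h|h]; auto.
    destruct h as [h|h]. pose proof (cosh_lt_mono v u Hv h). lra. subst; lra.
  - now apply cosh_lt_mono. Qed.

Lemma cosh_abs x : cosh (Rabs x) = cosh x.
Proof. unfold Rabs; destruct (Rcase_abs x). apply cosh_even. reflexivity. Qed.

Lemma arcosh_spec x : 1 <= x -> cosh (arcosh x) = x /\ 0 <= arcosh x.
Proof. intro H. unfold arcosh.
  assert (Hs : 0 <= x * x - 1) by nra.
  pose proof (sqrt_pos (x*x-1)) as Hq. pose proof (sqrt_sqrt _ Hs) as Hqq.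
  set (q := sqrt (x*x-1)) in *.
  assert (HE : 0 < x + q) by lra.
  split.
  - unfold cosh. rewrite expN, exp_ln by lra.
    assert (Hx : / (x + q) = x - q). { field_simplify_eq; [|lra]. replace (q*q) with (x*x-1) by lra. ring_simplify. replace (q^2) with (q*q) by ring. lra. }
    rewrite Hx. lra.
  - rewrite <- ln_1. destruct (Req_dec (x+q) 1) as [e|e]. rewrite e; lra.
    left. apply ln_increasing; lra. Qed.

Lemma edge_X_ge1 I a b : 0 <= I -> 0 < a -> 0 < b -> 1 <= cosh a * cosh b + I * sinh a * sinh b.
Proof. intros. pose proof (cosh_ge1 a); pose proof (cosh_ge1 b).
  pose proof (sinh_pos a H0); pose proof (sinh_pos b H1).
  assert (0 <= I * sinh a * sinh b) by (apply Rmult_le_pos; [apply Rmult_le_pos|]; lra).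
  nra. Qed.

Lemma edge_spec I a b : 0 <= I -> 0 < a -> 0 < b ->
  cosh (edge_len I a b) = cosh a * cosh b + I * sinh a * sinh b /\ 0 <= edge_len I a b.
Proof. intros. unfold edge_len. apply arcosh_spec. now apply edge_X_ge1. Qed.

Lemma tri_iff A B C : 0 <= A -> 0 <= B -> 0 <= C ->
  let x := cosh A in let y := cosh B in let z := cosh C in
  (A < B + C /\ B < C + A /\ C < A + B) <-> 0 < 1 + 2*x*y*z - x*x - y*y - z*z.
Proof. intros HA HB HC x y z.
  set (S := sinh B * sinh C).
  assert (HS : 0 <= S) by (apply Rmult_le_pos; apply sinh_nonneg; lra).
  assert (HS2 : S * S = (y*y-1)*(z*z-1)).
  { unfold S, y, z. pose proof (cosh_sq B); pose proof (cosh_sq C). nra. }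
  assert (E1 : cosh (B + C) = y*z + S) by (unfold y,z,S; apply cosh_plus).
  assert (E2 : cosh (B - C) = y*z - S) by (unfold y,z,S; apply cosh_minus).
  assert (D : 1 + 2*x*y*z - x*x - y*y - z*z = S*S - (x - y*z)*(x-y*z)) by (rewrite HS2; ring).
  rewrite D.
  assert (I1 : A < B + C <-> x < y*z + S). { rewrite <- E1. unfold x. symmetry; apply cosh_lt_iff; lra. }
  assert (I2 : (B < C + A /\ C < A + B) <-> y*z - S < x).
  { rewrite <- E2, <- cosh_abs. unfold x. rewrite cosh_lt_iff; [| apply Rabs_pos | lra].
    unfold Rabs; destruct (Rcase_abs (B - C)); split; intros; lra. }
  split.
  - intros [h1 [h2 h3]]. apply I1 in h1. assert (h: y*z - S < x) by (apply I2; auto). nra.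
  - intro h. assert (x < y*z + S) by nra. assert (y*z - S < x) by nra.
    apply I1 in H. apply I2 in H0. tauto. Qed.


Definition coth r := cosh r / sinh r.

Definition Qf (a b c k1 k2 k3 : R) : R :=
  (1-b*b)*(k1*k1) + (1-c*c)*(k2*k2) + (1-a*a)*(k3*k3) + 2*(a+b*c)*k1*k2 + 2*(b+a*c)*k2*k3 + 2*(c+a*b)*k3*k1
   - (1 - 2*a*b*c - a*a - b*b - c*c).

Lemma alg (a b c s1 s2 s3 k1 k2 k3 : R) :
  s1*s1*(k1*k1-1) = 1 -> s2*s2*(k2*k2-1) = 1 -> s3*s3*(k3*k3-1) = 1 ->
  let x := s1*s2*(k1*k2+a) in let y := s2*s3*(k2*k3+b) in let z := s3*s1*(k3*k1+c) in
  1 + 2*x*y*z - x*x - y*y - z*z = (s1*s2*s3)*(s1*s2*s3) * Qf a b c k1 k2 k3.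
Proof. intros h1 h2 h3 x y z. unfold x,y,z,Qf. nsatz. Qed.

Lemma coth_rel r : 0 < r -> sinh r * sinh r * (coth r * coth r - 1) = 1 /\ cosh r = sinh r * coth r.
Proof. intro H. pose proof (sinh_pos r H). pose proof (cosh_sq r). unfold coth. split.
  - replace (sinh r * sinh r * (cosh r / sinh r * (cosh r / sinh r) - 1)) with (cosh r * cosh r - sinh r * sinh r) by (field; lra). lra.
  - field; lra. Qed.

Lemma key (a b c r1 r2 r3 : R) : 0 <= a -> 0 <= b -> 0 <= c -> 0 < r1 -> 0 < r2 -> 0 < r3 ->
  (RH a b c (r1, r2, r3) <-> 0 < Qf a b c (coth r1) (coth r2) (coth r3)).
Proof. intros ha hb hc h1 h2 h3. unfold RH.
  destruct (edge_spec a r1 r2 ha h1 h2) as [E1 P1].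
  destruct (edge_spec b r2 r3 hb h2 h3) as [E2 P2].
  destruct (edge_spec c r3 r1 hc h3 h1) as [E3 P3].
  pose proof (tri_iff _ _ _ P1 P2 P3) as T. cbv zeta in T.
  rewrite E1, E2, E3 in T.
  destruct (coth_rel r1 h1) as [q1 e1]. destruct (coth_rel r2 h2) as [q2 e2]. destruct (coth_rel r3 h3) as [q3 e3].
  pose proof (alg a b c _ _ _ _ _ _ q1 q2 q3) as A. cbv zeta in A.
  rewrite e1, e2, e3 in T.
  assert (Ex: forall s1 s2 k1 k2 a, s1*k1*(s2*k2) + a*s1*s2 = s1*s2*(k1*k2+a)) by (intros; ring).
  rewrite !Ex, A in T.
  pose proof (sinh_pos r1 h1). pose proof (sinh_pos r2 h2). pose proof (sinh_pos r3 h3).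
  assert (HP : 0 < (sinh r1 * sinh r2 * sinh r3) * (sinh r1 * sinh r2 * sinh r3)).
  { assert (0 < sinh r1 * sinh r2 * sinh r3) by (apply Rmult_lt_0_compat; [apply Rmult_lt_0_compat|]; assumption).
    apply Rmult_lt_0_compat; assumption. }
  split.
  - intros [_ [_ [_ HH]]]. apply T in HH. 
    destruct (Rlt_or_le 0 (Qf a b c (coth r1) (coth r2) (coth r3))) as [h|h]; auto.
    assert ((sinh r1 * sinh r2 * sinh r3) * (sinh r1 * sinh r2 * sinh r3) * Qf a b c (coth r1) (coth r2) (coth r3) <= 0).
    { clear -HP h. nra. } lra.
  - intro HQ. split; [lra|split;[lra|split;[lra|]]]. apply T. apply Rmult_lt_0_compat; assumption.
Qed.


Definition phi r := coth r * coth r.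
Definition psi v := ln ((sqrt v + 1) / (sqrt v - 1)) / 2.

Lemma cosh_minus_sinh r : cosh r - sinh r = exp (- r).
Proof. unfold cosh, sinh. field. Qed.
Lemma cosh_plus_sinh r : cosh r + sinh r = exp r.
Proof. unfold cosh, sinh. field. Qed.

Lemma coth_gt1 r : 0 < r -> 1 < coth r.
Proof. intro H. pose proof (sinh_pos r H). pose proof (cosh_minus_sinh r). pose proof (exp_pos (-r)).
  unfold coth. apply (Rmult_lt_reg_r (sinh r)); auto. field_simplify; lra. Qed.

Lemma phi_gt1 r : 0 < r -> 1 < phi r.
Proof. intro H. pose proof (coth_gt1 r H). unfold phi. nra. Qed.

Lemma psi_phi r : 0 < r -> psi (phi r) = r.
Proof. intro H. unfold psi, phi. pose proof (coth_gt1 r H).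
  rewrite sqrt_square by lra.
  pose proof (sinh_pos r H).
  assert (E : (coth r + 1) / (coth r - 1) = exp r * exp r).
  { unfold coth. pose proof (cosh_minus_sinh r). pose proof (cosh_plus_sinh r).
    replace ((cosh r / sinh r + 1) / (cosh r / sinh r - 1)) with ((cosh r + sinh r)/(cosh r - sinh r)).
    2:{ unfold coth in H0. field. split. lra. 
        intro h. assert (cosh r = sinh r) by lra. rewrite H4 in H0. unfold Rdiv in H0. rewrite Rinv_r in H0; lra. }
    rewrite H2, H3, expN. pose proof (exp_pos r). field. lra. }
  rewrite E, <- exp_plus, ln_exp. field. Qed.

Lemma psi_pos v : 1 < v -> 0 < psi v.
Proof. intro H. unfold psi.
  assert (1 < sqrt v). { rewrite <- sqrt_1. apply sqrt_lt_1_alt. lra. }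
  assert (1 < (sqrt v + 1) / (sqrt v - 1)).
  { apply (Rmult_lt_reg_r (sqrt v - 1)). lra. field_simplify; lra. }
  rewrite <- ln_1. assert (0 < ln ((sqrt v + 1) / (sqrt v - 1))). { rewrite <- ln_1. apply ln_increasing; lra. }
  rewrite ln_1. lra. Qed.

Lemma coth_psi v : 1 < v -> coth (psi v) = sqrt v.
Proof. intro H.
  assert (Hu : 1 < sqrt v). { rewrite <- sqrt_1. apply sqrt_lt_1_alt. lra. }
  set (u := sqrt v) in *.
  assert (HE : 0 < (u + 1) / (u - 1)). { apply Rdiv_lt_0_compat; lra. }
  set (E := (u + 1) / (u - 1)) in *.
  assert (Hy : exp (psi v) * exp (psi v) = E).
  { rewrite <- exp_plus. unfold psi. fold u. fold E. replace (ln E / 2 + ln E / 2) with (ln E) by field. now apply exp_ln. }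
  pose proof (exp_pos (psi v)). set (y := exp (psi v)) in *.
  unfold coth, cosh, sinh. rewrite expN. fold y.
  assert (E1 : 1 < E). { unfold E. apply (Rmult_lt_reg_r (u - 1)). lra. field_simplify; lra. }
  assert (y*y - 1 <> 0) by lra.
  replace ((y + / y) / 2 / ((y - / y) / 2)) with ((y*y+1)/(y*y-1)) by (field; split; lra).
  rewrite Hy. unfold E. field. lra. Qed.

Lemma gm_concave s P0 Q0 P1 Q1 : 0 <= s <= 1 -> 0 <= P0 -> 0 <= Q0 -> 0 <= P1 -> 0 <= Q1 ->
  (1-s) * (sqrt P0 * sqrt Q0) + s * (sqrt P1 * sqrt Q1) <=
  sqrt ((1-s)*P0 + s*P1) * sqrt ((1-s)*Q0 + s*Q1).
Proof. intros Hs h1 h2 h3 h4.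
  pose proof (sqrt_sqrt _ h1). pose proof (sqrt_sqrt _ h2). pose proof (sqrt_sqrt _ h3). pose proof (sqrt_sqrt _ h4).
  pose proof (sqrt_pos P0). pose proof (sqrt_pos Q0). pose proof (sqrt_pos P1). pose proof (sqrt_pos Q1).
  set (p0 := sqrt P0) in *. set (q0 := sqrt Q0) in *. set (p1 := sqrt P1) in *. set (q1 := sqrt Q1) in *.
  assert (HA : 0 <= (1-s)*P0 + s*P1) by nra. assert (HB : 0 <= (1-s)*Q0 + s*Q1) by nra.
  rewrite <- sqrt_mult by assumption.
  set (R0 := (1 - s) * (p0 * q0) + s * (p1 * q1)).
  assert (HR : 0 <= R0). { unfold R0. assert (0 <= p0*q0) by nra. assert (0 <= p1*q1) by nra. nra. }
  rewrite <- (sqrt_square R0 HR). apply sqrt_le_1_alt.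
  assert (D : ((1 - s) * P0 + s * P1) * ((1 - s) * Q0 + s * Q1) - R0 * R0 = s*(1-s)*((p0*q1 - p1*q0)*(p0*q1-p1*q0))).
  { unfold R0. rewrite <- H, <- H0, <- H1, <- H2. ring. }
  assert (0 <= s*(1-s)*((p0*q1 - p1*q0)*(p0*q1-p1*q0))).
  { apply Rmult_le_pos. nra. apply sqn. }
  lra. Qed.

Definition Fv a b c v1 v2 v3 := Qf a b c (sqrt v1) (sqrt v2) (sqrt v3).

Definition cmb s x y := (1 - s) * x + s * y.

Lemma Fv_concave a b c s v1 v2 v3 w1 w2 w3 : 0 <= a -> 0 <= b -> 0 <= c -> 0 <= s <= 1 ->
  0 <= v1 -> 0 <= v2 -> 0 <= v3 -> 0 <= w1 -> 0 <= w2 -> 0 <= w3 ->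
  (1-s) * Fv a b c v1 v2 v3 + s * Fv a b c w1 w2 w3 <= Fv a b c (cmb s v1 w1) (cmb s v2 w2) (cmb s v3 w3).
Proof. intros ha hb hc Hs. intros.
  assert (H12 := gm_concave s v1 v2 w1 w2 Hs H H0 H2 H3).
  assert (H23 := gm_concave s v2 v3 w2 w3 Hs H0 H1 H3 H4).
  assert (H31 := gm_concave s v3 v1 w3 w1 Hs H1 H H4 H2).
  unfold Fv, Qf, cmb.
  assert (HH: forall x, 0 <= x -> sqrt x * sqrt x = x) by (intros; now apply sqrt_sqrt).
  assert (0 <= (1 - s) * v1 + s * w1) by nra. assert (0 <= (1 - s) * v2 + s * w2) by nra. assert (0 <= (1 - s) * v3 + s * w3) by nra.
  rewrite !HH by assumption.
  assert (0 <= a + b*c) by nra. assert (0 <= b + a*c) by nra. assert (0 <= c + a*b) by nra.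
  set (G12 := sqrt ((1 - s) * v1 + s * w1) * sqrt ((1 - s) * v2 + s * w2)) in *.
  set (G23 := sqrt ((1 - s) * v2 + s * w2) * sqrt ((1 - s) * v3 + s * w3)) in *.
  set (G31 := sqrt ((1 - s) * v3 + s * w3) * sqrt ((1 - s) * v1 + s * w1)) in *.
  assert (E : forall A B C, 2 * A * B * C = 2 * A * (B * C)) by (intros; ring).
  rewrite !E. fold G12 G23 G31.
  assert (F1: (a + b*c) * ((1 - s) * (sqrt v1 * sqrt v2) + s * (sqrt w1 * sqrt w2)) <= (a+b*c) * G12) by (apply Rmult_le_compat_l; auto).
  assert (F2: (b + a*c) * ((1 - s) * (sqrt v2 * sqrt v3) + s * (sqrt w2 * sqrt w3)) <= (b+a*c) * G23) by (apply Rmult_le_compat_l; auto).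
  assert (F3: (c + a*b) * ((1 - s) * (sqrt v3 * sqrt v1) + s * (sqrt w3 * sqrt w1)) <= (c+a*b) * G31) by (apply Rmult_le_compat_l; auto).
  lra. Qed.


Definition mixc s x y := psi (cmb s (phi x) (phi y)).
Definition Mix (s : R) (p q : R3) : R3 :=
  let '(x1,x2,x3) := p in let '(y1,y2,y3) := q in (mixc s x1 y1, mixc s x2 y2, mixc s x3 y3).

Lemma Fv_phi a b c r1 r2 r3 : 0 < r1 -> 0 < r2 -> 0 < r3 ->
  Fv a b c (phi r1) (phi r2) (phi r3) = Qf a b c (coth r1) (coth r2) (coth r3).
Proof. intros. unfold Fv, phi. pose proof (coth_gt1 r1 H). pose proof (coth_gt1 r2 H0). pose proof (coth_gt1 r3 H1).
  rewrite !sqrt_square by lra. reflexivity. Qed.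

Lemma cmb_gt1 s x y : 0 <= s <= 1 -> 1 < x -> 1 < y -> 1 < cmb s x y.
Proof. intros. unfold cmb. destruct (Rlt_or_le s 1).
  - assert (0 < (1-s)*(x-1)) by (apply Rmult_lt_0_compat; lra). assert (0 <= s*(y-1)) by (apply Rmult_le_pos; lra). nra.
  - assert (s = 1) by lra. subst. lra. Qed.

Lemma mix_in a b c s p q : 0 <= a -> 0 <= b -> 0 <= c -> 0 <= s <= 1 ->
  RH a b c p -> RH a b c q -> RH a b c (Mix s p q).
Proof. intros ha hb hc Hs. destruct p as [[x1 x2] x3]. destruct q as [[y1 y2] y3]. intros Hp Hq.
  assert (Px : 0 < x1 /\ 0 < x2 /\ 0 < x3) by (unfold RH in Hp; tauto).
  assert (Py : 0 < y1 /\ 0 < y2 /\ 0 < y3) by (unfold RH in Hq; tauto).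
  destruct Px as [p1 [p2 p3]]. destruct Py as [q1 [q2 q3]].
  apply key in Hp; auto. apply key in Hq; auto.
  rewrite <- Fv_phi in Hp, Hq by auto.
  simpl. unfold mixc.
  pose proof (phi_gt1 _ p1). pose proof (phi_gt1 _ p2). pose proof (phi_gt1 _ p3).
  pose proof (phi_gt1 _ q1). pose proof (phi_gt1 _ q2). pose proof (phi_gt1 _ q3).
  pose proof (cmb_gt1 s _ _ Hs H H2). pose proof (cmb_gt1 s _ _ Hs H0 H3). pose proof (cmb_gt1 s _ _ Hs H1 H4).
  apply key; auto; try (apply psi_pos; assumption).
  rewrite !coth_psi by assumption. fold (Fv a b c (cmb s (phi x1) (phi y1)) (cmb s (phi x2) (phi y2)) (cmb s (phi x3) (phi y3))).
  eapply Rlt_le_trans; [| apply Fv_concave; auto; lra].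
  nra. Qed.

Lemma Mix0 a b c p q : RH a b c p -> Mix 0 p q = p.
Proof. destruct p as [[x1 x2] x3]. destruct q as [[y1 y2] y3]. intro Hp. unfold RH in Hp.
  simpl. unfold mixc, cmb. replace ((1-0)*phi x1 + 0 * phi y1) with (phi x1) by ring.
  replace ((1-0)*phi x2 + 0 * phi y2) with (phi x2) by ring. replace ((1-0)*phi x3 + 0 * phi y3) with (phi x3) by ring.
  rewrite !psi_phi by tauto. reflexivity. Qed.

Lemma Mix1 a b c p q : RH a b c q -> Mix 1 p q = q.
Proof. destruct p as [[x1 x2] x3]. destruct q as [[y1 y2] y3]. intro Hp. unfold RH in Hp.
  simpl. unfold mixc, cmb. replace ((1-1)*phi x1 + 1 * phi y1) with (phi y1) by ring.
  replace ((1-1)*phi x2 + 1 * phi y2) with (phi y2) by ring. replace ((1-1)*phi x3 + 1 * phi y3) with (phi y3) by ring.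
  rewrite !psi_phi by tauto. reflexivity. Qed.

Lemma Mix_same a b c s p : RH a b c p -> Mix s p p = p.
Proof. destruct p as [[x1 x2] x3]. intro Hp. unfold RH in Hp.
  simpl. unfold mixc, cmb. replace ((1-s)*phi x1 + s * phi x1) with (phi x1) by ring.
  replace ((1-s)*phi x2 + s * phi x2) with (phi x2) by ring. replace ((1-s)*phi x3 + s * phi x3) with (phi x3) by ring.
  rewrite !psi_phi by tauto. reflexivity. Qed.


Definition ctn {X : Type} (d : X -> X -> R) (D : X -> Prop) (f : X -> R) (x : X) : Prop :=
  forall eps, 0 < eps -> exists delta, 0 < delta /\ forall y, D y -> d y x < delta -> Rabs (f y - f x) < eps.


Lemma ctn_const {X : Type} (d : X -> X -> R) (D : X -> Prop) (c : R) x : ctn d D (fun _ => c) x.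
Proof. intros e he. exists 1. split. lra. intros. rewrite Rminus_diag, Rabs_R0. lra. Qed.

Lemma ctn_ext {X : Type} (d : X -> X -> R) (D : X -> Prop) f g x : (forall y, f y = g y) -> ctn d D f x -> ctn d D g x.
Proof. intros E H e he. destruct (H e he) as [dl [h1 h2]]. exists dl. split; auto. intros. rewrite <- !E. auto. Qed.

Lemma ctn_plus {X : Type} (d : X -> X -> R) (D : X -> Prop) f g x : ctn d D f x -> ctn d D g x -> ctn d D (fun y => f y + g y) x.
Proof. intros Hf Hg e he. destruct (Hf (e/2)) as [d1 [h1 h1']]. lra. destruct (Hg (e/2)) as [d2 [h2 h2']]. lra.
  exists (Rmin d1 d2). split. now apply Rmin_pos. intros y Dy dy.
  assert (d y x < d1) by (eapply Rlt_le_trans; [exact dy| apply Rmin_l]).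
  assert (d y x < d2) by (eapply Rlt_le_trans; [exact dy| apply Rmin_r]).
  specialize (h1' y Dy H). specialize (h2' y Dy H0).
  replace (f y + g y - (f x + g x)) with ((f y - f x) + (g y - g x)) by ring.
  eapply Rle_lt_trans. apply Rabs_triang. lra. Qed.

Lemma ctn_comp {X : Type} (d : X -> X -> R) (D : X -> Prop) (h : R -> R) f x : ctn d D f x -> continuity_pt h (f x) -> ctn d D (fun y => h (f y)) x.
Proof. intros Hf Hh e he. unfold continuity_pt, continue_in, limit1_in, limit_in in Hh.
  destruct (Hh e he) as [a [ha Ha]]. destruct (Hf a ha) as [dl [hd Hd]].
  exists dl. split; auto. intros y Dy dy. specialize (Hd y Dy dy).
  destruct (Req_dec (f y) (f x)) as [E|E]. rewrite E, Rminus_diag, Rabs_R0. lra.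
  apply (Ha (f y)). split. split. constructor. auto. simpl. unfold R_dist. auto. Qed.

Lemma cont_sq : forall z, continuity_pt (fun z => z * z) z.
Proof. intros. reg. Qed.
Lemma cont_scal c : forall z, continuity_pt (fun z => c * z) z.
Proof. intros. reg. Qed.

Lemma ctn_mult {X : Type} (d : X -> X -> R) (D : X -> Prop) f g x : ctn d D f x -> ctn d D g x -> ctn d D (fun y => f y * g y) x.
Proof. intros Hf Hg.
  apply (ctn_ext d D (fun y => (/4) * ((f y + g y) * (f y + g y)) + (-/4) * ((f y + (-1) * g y) * (f y + (-1) * g y)))).
  { intro y. field. }
  apply ctn_plus; apply (ctn_comp d D (fun z => _ * z)); try apply cont_scal;
    apply (ctn_comp d D (fun z => z * z)); try apply cont_sq; apply ctn_plus; auto.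
  apply (ctn_comp d D (fun z => -1 * z)); auto. apply cont_scal. Qed.

Lemma ctn_minus {X : Type} (d : X -> X -> R) (D : X -> Prop) f g x : ctn d D f x -> ctn d D g x -> ctn d D (fun y => f y - g y) x.
Proof. intros Hf Hg. apply (ctn_ext d D (fun y => f y + (-1) * g y)). intro; ring.
  apply ctn_plus; auto. apply ctn_mult; auto. apply ctn_const. Qed.


Lemma cont_phi r : 0 < r -> continuity_pt phi r.
Proof. intro H. pose proof (sinh_pos r H). unfold phi, coth, cosh, sinh in *. reg. lra. Qed.

Lemma cont_ln x : 0 < x -> continuity_pt ln x.
Proof. intro H. apply derivable_continuous_pt. exists (/ x). now apply derivable_pt_lim_ln. Qed.

Lemma cont_psi v : 1 < v -> continuity_pt psi v.
Proof. intro H. assert (1 < sqrt v). { rewrite <- sqrt_1. apply sqrt_lt_1_alt. lra. }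
  unfold psi. reg. lra. lra. apply cont_ln. apply Rdiv_lt_0_compat; lra. Qed.


Definition pr1 (p : R3) : R := let '(x,_,_) := p in x.
Definition pr2 (p : R3) : R := let '(_,x,_) := p in x.
Definition pr3 (p : R3) : R := let '(_,_,x) := p in x.

Lemma dist3_pr p q : Rabs (pr1 p - pr1 q) <= dist3 p q /\ Rabs (pr2 p - pr2 q) <= dist3 p q /\ Rabs (pr3 p - pr3 q) <= dist3 p q.
Proof. destruct p as [[x1 x2] x3]; destruct q as [[y1 y2] y3]; simpl.
  split. apply Rmax_l. split. eapply Rle_trans; [|apply Rmax_r]. apply Rmax_l.
  eapply Rle_trans; [|apply Rmax_r]. apply Rmax_r. Qed.

Lemma dist3_lt p q e : Rabs (pr1 p - pr1 q) < e -> Rabs (pr2 p - pr2 q) < e -> Rabs (pr3 p - pr3 q) < e -> dist3 p q < e.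
Proof. destruct p as [[x1 x2] x3]; destruct q as [[y1 y2] y3]; simpl. intros.
  apply Rmax_lub_lt; auto. apply Rmax_lub_lt; auto. Qed.

Lemma ctn3 {X : Type} (d : X -> X -> R) (D : X -> Prop) (f : X -> R3) x :
  ctn d D (fun y => pr1 (f y)) x -> ctn d D (fun y => pr2 (f y)) x -> ctn d D (fun y => pr3 (f y)) x ->
  forall eps, 0 < eps -> exists delta, 0 < delta /\ forall y, D y -> d y x < delta -> dist3 (f y) (f x) < eps.
Proof. intros H1 H2 H3 e he. destruct (H1 e he) as [d1 [a1 b1]]. destruct (H2 e he) as [d2 [a2 b2]]. destruct (H3 e he) as [d3 [a3 b3]].
  exists (Rmin d1 (Rmin d2 d3)). split. repeat apply Rmin_pos; auto.
  intros y Dy dy. pose proof (Rmin_l d1 (Rmin d2 d3)). pose proof (Rmin_r d1 (Rmin d2 d3)).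
  pose proof (Rmin_l d2 d3). pose proof (Rmin_r d2 d3).
  apply dist3_lt; [apply b1|apply b2|apply b3]; auto; lra. Qed.

Lemma pr_Mix s p q : pr1 (Mix s p q) = mixc s (pr1 p) (pr1 q) /\ pr2 (Mix s p q) = mixc s (pr2 p) (pr2 q) /\
  pr3 (Mix s p q) = mixc s (pr3 p) (pr3 q).
Proof. destruct p as [[x1 x2] x3]; destruct q as [[y1 y2] y3]; simpl. auto. Qed.

Lemma RH_pos a b c p : RH a b c p -> 0 < pr1 p /\ 0 < pr2 p /\ 0 < pr3 p.
Proof. destruct p as [[x1 x2] x3]. unfold RH. simpl. tauto. Qed.

Lemma ctn_mixc {X : Type} (d : X -> X -> R) (D : X -> Prop) fs fa fb x :
  ctn d D fs x -> ctn d D fa x -> ctn d D fb x -> 0 <= fs x <= 1 -> 0 < fa x -> 0 < fb x ->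
  ctn d D (fun y => mixc (fs y) (fa y) (fb y)) x.
Proof. intros Hs Ha Hb Hs1 Ha1 Hb1. unfold mixc.
  apply (ctn_comp d D psi (fun y => cmb (fs y) (phi (fa y)) (phi (fb y)))).
  - unfold cmb. apply (ctn_plus d D (fun y => (1 - fs y) * phi (fa y)) (fun y => fs y * phi (fb y))).
    + apply (ctn_mult d D (fun y => 1 - fs y) (fun y => phi (fa y))).
      * apply (ctn_minus d D (fun _ => 1) fs); auto. apply ctn_const.
      * apply (ctn_comp d D phi fa); auto. now apply cont_phi.
    + apply (ctn_mult d D fs (fun y => phi (fb y))); auto.
      apply (ctn_comp d D phi fb); auto. now apply cont_phi.
  - apply cont_psi. apply cmb_gt1; auto; now apply phi_gt1. Qed.


Lemma pathc a b c (ha : 0 <= a) (hb : 0 <= b) (hc : 0 <= c) : path_connected3 (RH a b c).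
Proof. intros p q Hp Hq. exists (fun t => Mix t p q). split; [split|].
  - intros t Ht. apply (ctn3 (fun u v => Rabs (u - v)) (fun u => 0 <= u <= 1)).
    all: destruct (RH_pos _ _ _ _ Hp) as [p1 [p2 p3]]; destruct (RH_pos _ _ _ _ Hq) as [q1 [q2 q3]].
    + apply (ctn_ext _ _ (fun y => mixc y (pr1 p) (pr1 q))). intro; symmetry; apply pr_Mix.
      apply ctn_mixc; auto; try apply ctn_const. intros e he; exists e; split; auto.
    + apply (ctn_ext _ _ (fun y => mixc y (pr2 p) (pr2 q))). intro; symmetry; apply pr_Mix.
      apply ctn_mixc; auto; try apply ctn_const. intros e he; exists e; split; auto.
    + apply (ctn_ext _ _ (fun y => mixc y (pr3 p) (pr3 q))). intro; symmetry; apply pr_Mix.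
      apply ctn_mixc; auto; try apply ctn_const. intros e he; exists e; split; auto.
  - intros t Ht. apply mix_in; auto.
  - split. eapply Mix0; eauto. eapply Mix1; eauto. Qed.

Lemma conn_of_path S : path_connected3 S -> connected3 S.
Proof. intros HP U V oU oV cov [p [Sp Up]] [q [Sq Vq]].
  destruct (HP p q Sp Sq) as [g [[gc gS] [g0 g1]]].
  set (E := fun t => 0 <= t <= 1 /\ U (g t)).
  assert (Eb : bound E). { exists 1. intros t [Ht _]. lra. }
  assert (Ee : exists t, E t). { exists 0. split. lra. now rewrite g0. }
  destruct (completeness E Eb Ee) as [m [mub mlub]].
  assert (m0 : 0 <= m). { apply mub. split. lra. now rewrite g0. }
  assert (m1 : m <= 1). { apply mlub. intros t [Ht _]. lra. }
  assert (Sm : S (g m)) by (apply gS; lra).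
  destruct (classic (U (g m))) as [Um|nUm].
  - destruct (classic (V (g m))) as [Vm|nVm]. exists (g m); auto.
    destruct (Req_dec m 1) as [e1|e1]. { subst m. rewrite g1 in nVm. contradiction. }
    destruct (oU _ Um) as [eps [heps Heps]].
    destruct (gc m (conj m0 m1) eps heps) as [dl [hdl Hdl]].
    set (t' := Rmin 1 (m + dl/2)).
    assert (t1 : m < t'). { unfold t'. apply Rmin_glb_lt; lra. }
    assert (t2 : t' <= 1) by apply Rmin_l. assert (t3 : t' <= m + dl/2) by apply Rmin_r.
    assert (E t'). { split. lra. apply Heps. apply Hdl. lra. rewrite Rabs_right; lra. }
    pose proof (mub _ H). lra.
  - assert (Vm : V (g m)) by (destruct (cov _ Sm); tauto).
    destruct (oV _ Vm) as [eps [heps Heps]].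
    destruct (gc m (conj m0 m1) eps heps) as [dl [hdl Hdl]].
    destruct (classic (exists t, E t /\ m - dl < t)) as [[t [[Ht Ut] Hlt]] | nex].
    + exists (g t). split. apply gS; auto. split; auto. apply Heps. apply Hdl; auto.
      pose proof (mub t (conj Ht Ut)). rewrite Rabs_left1; lra.
    + assert (m <= m - dl). { apply mlub. intros t Et. destruct (Rle_or_lt t (m - dl)); auto. exfalso; apply nex; eauto. }
      lra. Qed.

Lemma open_RH a b c (ha : 0 <= a) (hb : 0 <= b) (hc : 0 <= c) : open3 (RH a b c).
Proof. intros p Hp. destruct (RH_pos _ _ _ _ Hp) as [p1 [p2 p3]].
  destruct p as [[x1 x2] x3]. simpl in p1, p2, p3.
  assert (HQ := Hp). apply key in HQ; auto.
  set (F := fun q : R3 => Qf a b c (coth (pr1 q)) (coth (pr2 q)) (coth (pr3 q))).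
  assert (Hc : forall i, (i = pr1 \/ i = pr2 \/ i = pr3) -> ctn dist3 (fun _ => True) (fun q => coth (i q)) (x1,x2,x3)).
  { intros i Hi. apply (ctn_comp dist3 (fun _ => True) coth i).
    - intros e he. exists e. split; auto. intros y _ dy. pose proof (dist3_pr y (x1,x2,x3)).
      destruct Hi as [ -> | [ -> | -> ] ]; lra.
    - assert (0 < i (x1,x2,x3)) by (destruct Hi as [ -> | [ -> | -> ] ]; simpl; auto).
      pose proof (sinh_pos _ H). unfold coth, cosh, sinh in *. reg. lra. }
  assert (CF : ctn dist3 (fun _ => True) F (x1,x2,x3)).
  { unfold F, Qf.
    pose proof (Hc pr1 (or_introl eq_refl)). pose proof (Hc pr2 (or_intror (or_introl eq_refl))).
    pose proof (Hc pr3 (or_intror (or_intror eq_refl))).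
    repeat first [ apply ctn_const | assumption | apply ctn_minus | apply ctn_plus | apply ctn_mult ]. }
  destruct (CF (F (x1,x2,x3))) as [dl [hdl Hdl]]. exact HQ.
  exists (Rmin dl (Rmin x1 (Rmin x2 x3))). split. repeat apply Rmin_pos; auto.
  intros q dq. pose proof (Rmin_l dl (Rmin x1 (Rmin x2 x3))). pose proof (Rmin_r dl (Rmin x1 (Rmin x2 x3))).
  pose proof (Rmin_l x1 (Rmin x2 x3)). pose proof (Rmin_r x1 (Rmin x2 x3)). pose proof (Rmin_l x2 x3). pose proof (Rmin_r x2 x3).
  specialize (Hdl q I ltac:(lra)). pose proof (dist3_pr q (x1,x2,x3)) as [d1 [d2 d3]].
  assert (dd : dist3 q (x1,x2,x3) < x1 /\ dist3 q (x1,x2,x3) < x2 /\ dist3 q (x1,x2,x3) < x3) by lra.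
  destruct q as [[y1 y2] y3]. simpl pr1 in d1. simpl pr2 in d2. simpl pr3 in d3.
  set (DD := dist3 (y1, y2, y3) (x1, x2, x3)) in *.
  assert (0 < y1) by (unfold Rabs in d1; destruct (Rcase_abs (y1 - x1)); lra).
  assert (0 < y2) by (unfold Rabs in d2; destruct (Rcase_abs (y2 - x2)); lra).
  assert (0 < y3) by (unfold Rabs in d3; destruct (Rcase_abs (y3 - x3)); lra).
  apply key; auto. unfold F in Hdl. simpl in Hdl. unfold Rabs in Hdl.
  destruct (Rcase_abs _) in Hdl; lra. Qed.



Definition d2 (x y : R * R) : R := Rmax (Rabs (fst x - fst y)) (Rabs (snd x - snd y)).
Definition sq (x : R * R) : Prop := 0 <= fst x <= 1 /\ 0 <= snd x <= 1.

Lemma loops a b c : 0 <= a -> 0 <= b -> 0 <= c ->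
  forall g, path_in (RH a b c) g -> g 0 = g 1 ->
    exists H : R -> R -> R3,
      square_cont H /\
      (forall s t, 0 <= s <= 1 -> 0 <= t <= 1 -> RH a b c (H s t)) /\
      (forall t, 0 <= t <= 1 -> H 0 t = g t) /\
      (forall t, 0 <= t <= 1 -> H 1 t = g 0) /\
      (forall s, 0 <= s <= 1 -> H s 0 = g 0 /\ H s 1 = g 0).
Proof. intros ha hb hc g [gc gS] g01.
  assert (G0 : RH a b c (g 0)) by (apply gS; lra).
  exists (fun s t => Mix s (g t) (g 0)). split; [|split; [|split; [|split]]].
  - intros s t Hs Ht eps heps.
    assert (Gt : RH a b c (g t)) by (apply gS; lra).
    destruct (RH_pos _ _ _ _ Gt) as [p1 [p2 p3]]. destruct (RH_pos _ _ _ _ G0) as [q1 [q2 q3]].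
    assert (Cf : ctn d2 sq fst (s,t)).
    { intros e he. exists e. split; auto. intros y _ dy. unfold d2 in dy. pose proof (Rmax_l (Rabs (fst y - fst (s,t))) (Rabs (snd y - snd (s,t)))). lra. }
    assert (Cg : forall i, (i = pr1 \/ i = pr2 \/ i = pr3) -> ctn d2 sq (fun y => i (g (snd y))) (s,t)).
    { intros i Hi e he. destruct (gc t Ht e he) as [dl [hdl Hdl]]. exists dl. split; auto.
      intros y [_ Hy] dy. unfold d2 in dy. pose proof (Rmax_r (Rabs (fst y - fst (s,t))) (Rabs (snd y - snd (s,t)))).
      simpl in *. specialize (Hdl (snd y) Hy ltac:(lra)). pose proof (dist3_pr (g (snd y)) (g t)).
      destruct Hi as [ -> | [ -> | -> ] ]; lra. }
    destruct (ctn3 d2 sq (fun y => Mix (fst y) (g (snd y)) (g 0)) (s,t)) with (eps := eps) as [dl [hdl Hdl]]; auto.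
    + apply (ctn_ext _ _ (fun y => mixc (fst y) (pr1 (g (snd y))) (pr1 (g 0)))). intro; symmetry; apply pr_Mix.
      apply ctn_mixc; auto; try apply ctn_const. all: try (apply Cg; auto).
    + apply (ctn_ext _ _ (fun y => mixc (fst y) (pr2 (g (snd y))) (pr2 (g 0)))). intro; symmetry; apply pr_Mix.
      apply ctn_mixc; auto; try apply ctn_const. all: try (apply Cg; auto).
    + apply (ctn_ext _ _ (fun y => mixc (fst y) (pr3 (g (snd y))) (pr3 (g 0)))). intro; symmetry; apply pr_Mix.
      apply ctn_mixc; auto; try apply ctn_const. all: try (apply Cg; auto).
    + exists dl. split; auto. intros s' t' Hs' Ht' ds dt.
      apply (Hdl (s',t')). split; auto. unfold d2. simpl. apply Rmax_lub_lt; auto.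
  - intros s t Hs Ht. apply mix_in; auto.
  - intros t Ht. eapply Mix0. apply gS; auto.
  - intros t Ht. eapply Mix1. exact G0.
  - intros s Hs. split. eapply Mix_same; eauto. rewrite <- g01. eapply Mix_same; eauto. Qed.

Theorem lemma3p1 (Iij Ijk Iki : R) (hij : 0 <= Iij) (hjk : 0 <= Ijk) (hki : 0 <= Iki) :
  (forall p : R3, RH Iij Ijk Iki p ->
     let '(ri, rj, rk) := p in 0 < ri /\ 0 < rj /\ 0 < rk) /\
  open3 (RH Iij Ijk Iki) /\
  connected3 (RH Iij Ijk Iki) /\
  simply_connected3 (RH Iij Ijk Iki).
Proof. split; [|split; [|split]].
  - intros [[x y] z] H. unfold RH in H. tauto.
  - now apply open_RH.
  - apply conn_of_path. now apply pathc.
  - split. now apply pathc. now apply loops. Qed.
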